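(* Let $k=2m+1$, $l=2n+1$ be odd integers and let $V(k,l)\subset\mathbb C^3(x,y,z)$ be the vanishing set of $S_n(t)S_{m-1}(z)-S_{n-1}(t)S_m(z)$, where $t=\left( xS_m(z)-yS_{m-1}(z) \right)\left( yS_m(z)-xS_{m-1}(z) \right)-z\left(S^2_m(z)+S^2_{m-1}(z)\right)+4S_m(z)S_{m-1}(z)$. Then on $V(k,l)$, $S_m^2(z)-S_{m-1}^2(z)=0$ only for a set of codimension one.
   Context: The Chebyshev polynomials $S_j(\omega)$ are defined for all integers $j$ by $S_0=1$, $S_1=\omega$, $S_{j+1}=\omega S_j-S_{j-1}$. $V(k,l)$ is a surface (dimension two), a natural model of the closure of the irreducible characters of the double twist link $J(k,l)$. *)

(* Defs.v *)
From HB Require Import structures.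
From mathcomp Require Import all_boot all_order all_algebra.
Set Implicit Arguments. Unset Strict Implicit. Unset Printing Implicit Defensive.
Import Order.TTheory GRing.Theory Num.Theory.
Local Open Scope ring_scope.

(* Chebyshev polynomials S_j evaluated at w, for j : nat:
   S_0 = 1, S_1 = w, S_{j+2} = w S_{j+1} - S_j. *)
Fixpoint chebS_nat (C : nzRingType) (j : nat) (w : C) : C * C :=
  (* returns (S_j, S_{j+1}) *)
  match j with
  | 0%N => (1, w)
  | j'.+1 => let p := chebS_nat j' w in (p.2, w * p.2 - p.1)
  end.

(* Extension to all integers via the same recurrence:
   S_{-1} = 0 and S_{-(j+2)} = - S_j. *)
Definition chebS (C : nzRingType) (j : int) (w : C) : C :=
  match j with
  | Posz j' => (chebS_nat j' w).1
  | Negz 0 => 0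
  | Negz j'.+1 => - (chebS_nat j' w).1
  end.

Definition tV (C : nzRingType) (m : int) (x y z : C) : C :=
  (x * chebS m z - y * chebS (m - 1) z) * (y * chebS m z - x * chebS (m - 1) z)
  - z * (chebS m z ^+ 2 + chebS (m - 1) z ^+ 2)
  + 4%:R * chebS m z * chebS (m - 1) z.

Definition Vkl (C : nzRingType) (m n : int) (x y z : C) : Prop :=
  chebS n (tV m x y z) * chebS (m - 1) z - chebS (n - 1) (tV m x y z) * chebS m z = 0.

(* Evaluation of a bivariate polynomial p(a,b) in {poly {poly C}}:
   the outer variable is b, the inner one a. *)
Definition eval2 (C : nzRingType) (p : {poly {poly C}}) (a b : C) : C :=
  (p.[b%:P]).[a].

(* A subset A of C^3 has dimension at most one (transcendence-degree
   definition): any two of the coordinate functions are algebraically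
   dependent on A, i.e. each coordinate projection of A to C^2 lies on a
   plane curve. *)
Definition dim_le1 (C : nzRingType) (A : C -> C -> C -> Prop) : Prop :=
  (exists p : {poly {poly C}}, p != 0 /\ forall x y z, A x y z -> eval2 p x y = 0) /\
  (exists p : {poly {poly C}}, p != 0 /\ forall x y z, A x y z -> eval2 p x z = 0) /\
  (exists p : {poly {poly C}}, p != 0 /\ forall x y z, A x y z -> eval2 p y z = 0).

(* Main.v *)
Require Import Defs.
From mathcomp Require Import all_boot all_order all_algebra.
From mathcomp Require Import ring lra zify.
Import GRing.Theory Num.Theory.
Local Open Scope ring_scope.

Section Morph.
Variables (R S : nzRingType) (f : R -> S).
Hypotheses (f1 : f 1 = 1) (fD : forall u v, f (u + v) = f u + f v)
  (fN : forall u, f (- u) = - f u) (fM : forall u v, f (u * v) = f u * f v).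

Lemma f0 : f 0 = 0.
Proof. by rewrite -(subrr 1) fD fN f1 subrr. Qed.

Lemma fB u v : f (u - v) = f u - f v.
Proof. by rewrite fD fN. Qed.

Lemma fX u k : f (u ^+ k) = f u ^+ k.
Proof. elim: k => [|k IH]; first by rewrite !expr0 f1. by rewrite !exprS fM IH. Qed.

Lemma fnat k : f k%:R = k%:R.
Proof. elim: k => [|k IH]; first by rewrite f0. by rewrite !mulrS fD f1 IH. Qed.

Lemma cheb_nat_morph k w :
  f (chebS_nat k w).1 = (chebS_nat k (f w)).1 /\ f (chebS_nat k w).2 = (chebS_nat k (f w)).2.
Proof.
elim: k => [|k [IH1 IH2]] /=; first by rewrite f1.
by rewrite IH2 fB fM IH1 IH2.
Qed.

Lemma cheb_morph j w : f (chebS j w) = chebS j (f w).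
Proof.
case: j => [k|[|k]] /=; first exact: (cheb_nat_morph k w).1.
  exact: f0.
by rewrite fN (cheb_nat_morph k w).1.
Qed.

Lemma tV_morph m x y z : f (tV m x y z) = tV m (f x) (f y) (f z).
Proof.
rewrite /tV fD (fM _ (chebS _ _)) (fM 4%:R) fnat fB (fM z) fD fX fX fM !fB !fM !cheb_morph //.
Qed.
Lemma fprod (I : Type) (s : seq I) (F : I -> R) :
  f (\prod_(i <- s) F i) = \prod_(i <- s) f (F i).
Proof. elim: s => [|i s IH]; first by rewrite !big_nil f1. by rewrite !big_cons fM IH. Qed.
End Morph.

Section Main.
Variable C : numClosedFieldType.

Lemma cheb_nat2 k : chebS_nat k (2%:R : C) = (k.+1%:R, k.+2%:R).
Proof.
elim: k => [|k IH] /=; first by [].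
rewrite IH /=. congr pair. rewrite -[k.+3]addn3 -[k.+2]addn2 -[k.+1]addn1 !natrD. ring.
Qed.

Lemma cheb2 j : chebS j (2%:R : C) = j%:~R + 1.
Proof.
case: j => [k|[|k]] /=.
- by rewrite cheb_nat2 /= -addn1 natrD.
- by rewrite NegzE /= mulrN1z addrC subrr.
- rewrite cheb_nat2 /= NegzE mulrNz -[k.+2]addn2 -[k.+1]addn1 !natrD. ring.
Qed.

Lemma cheb2sq j : chebS j (2%:R : C) ^+ 2 - chebS (j - 1) (2%:R : C) ^+ 2 = (2 * j + 1)%:~R.
Proof. rewrite !cheb2. ring. Qed.

Lemma twoj1 (j : int) : (2 * j + 1)%:~R != (0 : C).
Proof. rewrite intr_eq0. apply/eqP. lia. Qed.

Lemma cheb_id_nat k (w : C) : let p := chebS_nat k w in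
  p.1 ^+ 2 - w * p.1 * p.2 + p.2 ^+ 2 = 1.
Proof.
elim: k => [|k IH] /=; first by ring.
rewrite -IH /=. ring.
Qed.

Lemma cheb_id (m : int) (w : C) :
  chebS m w ^+ 2 - w * chebS m w * chebS (m - 1) w + chebS (m - 1) w ^+ 2 = 1.
Proof.
case: m => [[|k]|k].
- rewrite /=. ring.
- rewrite /= subSS subn0.
  have /= H := cheb_id_nat k w. rewrite -[RHS]H. ring.
- rewrite /= addn0.
  case: k => [|k] /=. ring.
  have /= H := cheb_id_nat k w. rewrite -[RHS]H. ring.
Qed.

Lemma ab_nz (m : int) (z : C) :
  chebS m z ^+ 2 - chebS (m - 1) z ^+ 2 = 0 -> chebS m z != 0 /\ chebS (m - 1) z != 0.
Proof.
move=> hQ.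
have hid := cheb_id m z.
have ha : chebS m z != 0.
  apply/negP => /eqP ha. move: hQ hid; rewrite ha => hQ hid.
  have hb : chebS (m - 1) z ^+ 2 = 0 by move/eqP: hQ; rewrite expr0n /= sub0r oppr_eq0 => /eqP.
  rewrite hb mulr0 mul0r expr0n /= subrr add0r in hid.
  by move/eqP: hid; rewrite eq_sym oner_eq0.
split => //.
apply/negP => /eqP hb; move: hQ; rewrite hb expr0n /= subr0 => /eqP.
by rewrite expf_eq0 /= (negPf ha).
Qed.

Lemma key (m n : int) (x y z : C) : Vkl m n x y z ->
  chebS m z ^+ 2 - chebS (m - 1) z ^+ 2 = 0 ->
  chebS n (tV m x y z) ^+ 2 - chebS (n - 1) (tV m x y z) ^+ 2 = 0.
Proof.
rewrite /Vkl => hV hQ.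
have [ha _] := ab_nz m z hQ.
move: hV hQ ha.
set a := chebS m z; set b := chebS (m - 1) z.
set sa := chebS n _; set sb := chebS (n - 1) _ => hV hQ ha.
have E : (sa ^+ 2 - sb ^+ 2) * a ^+ 2 = (sa * b - sb * a) * (sa * b + sb * a) + sa ^+ 2 * (a ^+ 2 - b ^+ 2) by ring.
rewrite hV hQ mul0r mulr0 addr0 in E.
move/eqP: E; rewrite mulf_eq0 expf_eq0 /= (negPf ha) orbF.
by move/eqP.
Qed.

Lemma key2 (m n : int) (r : C) :
  chebS m r ^+ 2 - chebS (m - 1) r ^+ 2 = 0 ->
  exists x0, chebS n (tV m x0 0 r) ^+ 2 - chebS (n - 1) (tV m x0 0 r) ^+ 2 != 0.
Proof.
move=> hQ; have [ha hb] := ab_nz m r hQ.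
set a := chebS m r; set b := chebS (m - 1) r.
set c := - r * (a ^+ 2 + b ^+ 2) + 4%:R * a * b.
have hab : a * b != 0 by rewrite mulf_neq0.
exists (sqrtC ((c - 2%:R) / (a * b))).
have -> : tV m (sqrtC ((c - 2%:R) / (a * b))) 0 r = 2%:R.
  have -> : tV m (sqrtC ((c - 2%:R) / (a * b))) 0 r =
     - (sqrtC ((c - 2%:R) / (a * b)) ^+ 2 * (a * b)) + c by rewrite /tV /c -/a -/b; ring.
  rewrite sqrtCK divfK //. ring.
by rewrite cheb2sq twoj1.
Qed.

Lemma ev1 a b : eval2 (1 : {poly {poly C}}) a b = 1.
Proof. by rewrite /eval2 !hornerE. Qed.
Lemma evD a b u v : eval2 (u + v : {poly {poly C}}) a b = eval2 u a b + eval2 v a b.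
Proof. by rewrite /eval2 !hornerE. Qed.
Lemma evN a b u : eval2 (- u : {poly {poly C}}) a b = - eval2 u a b.
Proof. by rewrite /eval2 !hornerE. Qed.
Lemma evM a b u v : eval2 (u * v : {poly {poly C}}) a b = eval2 u a b * eval2 v a b.
Proof. by rewrite /eval2 !hornerE. Qed.
Lemma evX a b : eval2 ('X : {poly {poly C}}) a b = b.
Proof. by rewrite /eval2 !hornerE. Qed.
Lemma evXC a b : eval2 (('X : {poly C})%:P) a b = a.
Proof. by rewrite /eval2 !hornerE. Qed.
Lemma evC (a b c : C) : eval2 (c%:P%:P) a b = c.
Proof. by rewrite /eval2 !hornerE. Qed.

Definition ev (a b : C) := fun p : {poly {poly C}} => eval2 p a b.

Lemma ev_cheb (a b : C) j (u : {poly {poly C}}) : eval2 (chebS j u) a b = chebS j (eval2 u a b).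
Proof. exact: (@cheb_morph _ _ (ev a b) (ev1 a b) (evD a b) (evN a b) (evM a b)). Qed.
Lemma ev_exp (a b : C) (u : {poly {poly C}}) k : eval2 (u ^+ k) a b = eval2 u a b ^+ k.
Proof. exact: (@fX _ _ (ev a b) (ev1 a b) (evM a b)). Qed.
Lemma ev_tV (a b : C) m (x y z : {poly {poly C}}) : eval2 (tV m x y z) a b = tV m (eval2 x a b) (eval2 y a b) (eval2 z a b).
Proof. exact: (@tV_morph _ _ (ev a b) (ev1 a b) (evD a b) (evN a b) (evM a b)). Qed.
Lemma ev_prod (a b : C) (I : Type) (s : seq I) (F : I -> {poly {poly C}}) :
  eval2 (\prod_(i <- s) F i) a b = \prod_(i <- s) eval2 (F i) a b.
Proof. exact: (@fprod _ _ (ev a b) (ev1 a b) (evM a b)). Qed.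

Lemma h_cheb (z : C) j (u : {poly C}) : (chebS j u).[z] = chebS j u.[z].
Proof.
apply: (@cheb_morph _ _ (fun p : {poly C} => p.[z])) => *; by rewrite !hornerE.
Qed.
Lemma h_exp (z : C) (u : {poly C}) k : (u ^+ k).[z] = u.[z] ^+ k.
Proof. exact: (@fX _ _ (fun p : {poly C} => p.[z])) (hornerC 1 z) (fun u v => hornerM u v z) u k. Qed.

End Main.

Theorem lemma4p3 (C : numClosedFieldType) (m n : int) :
  dim_le1 (fun x y z : C =>
    Vkl m n x y z /\ chebS m z ^+ 2 - chebS (m - 1) z ^+ 2 = 0).
Proof.
pose pz : {poly {poly C}} := chebS m 'X ^+ 2 - chebS (m - 1) 'X ^+ 2.
have evpz : forall a b, eval2 pz a b = chebS m b ^+ 2 - chebS (m - 1) b ^+ 2.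
  by move=> a b; rewrite /pz evD evN !ev_exp !ev_cheb evX.
have pz0 : pz != 0.
  apply/negP => /eqP h.
  have := evpz 0 2%:R; rewrite h /eval2 !hornerE cheb2sq => /esym/eqP.
  by rewrite (negPf (twoj1 _ m)).
pose q : {poly C} := chebS m 'X ^+ 2 - chebS (m - 1) 'X ^+ 2.
have hq : forall z, q.[z] = chebS m z ^+ 2 - chebS (m - 1) z ^+ 2.
  by move=> z; rewrite /q hornerD hornerN !h_exp !h_cheb hornerX.
have q0 : q != 0.
  apply/negP => /eqP h.
  have := hq 2%:R; rewrite h horner0 cheb2sq => /esym/eqP.
  by rewrite (negPf (twoj1 _ m)).
have [rs Hrs] := closed_field_poly_normal q.
have Hroot : forall z, (z \in rs) = (q.[z] == 0).
  move=> z; rewrite -[q.[z] == 0]/(root q z) Hrs rootZ ?root_prod_XsubC //.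
  by rewrite lead_coef_eq0.
pose F r : {poly {poly C}} :=
  chebS n (tV m ('X : {poly C})%:P 'X r%:P%:P) ^+ 2
  - chebS (n - 1) (tV m ('X : {poly C})%:P 'X r%:P%:P) ^+ 2.
have evF : forall r a b, eval2 (F r) a b =
   chebS n (tV m a b r) ^+ 2 - chebS (n - 1) (tV m a b r) ^+ 2.
  by move=> r a b; rewrite /F evD evN !ev_exp !ev_cheb ev_tV evX evXC evC.
split; last split.
- exists (\prod_(r <- rs) F r); split.
  + rewrite prodf_seq_neq0; apply/allP => r rin /=.
    have hQ : chebS m r ^+ 2 - chebS (m - 1) r ^+ 2 = 0.
      by rewrite -hq; apply/eqP; rewrite -Hroot.
    have [x0 hx0] := @key2 C m n r hQ.
    apply/negP => /eqP h; move: hx0; rewrite -evF h /eval2 !hornerE.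
    by rewrite eqxx.
  + move=> x y z [hV hQ]; rewrite ev_prod; apply/eqP.
    rewrite prodf_seq_eq0; apply/hasP; exists z.
      by rewrite Hroot hq hQ.
    by rewrite /= evF (@key C m n x y z hV hQ).
- exists pz; split => // x y z [_ hQ]; by rewrite evpz.
- exists pz; split => // x y z [_ hQ]; by rewrite evpz.
Qed.
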